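(* Let $P$ be a finite graded poset with rank function $\operatorname{rk}$. Then $\mathsf{Z}_{P,\operatorname{rk}}$ is entirely determined by the flag $f$-vector of $P$: if $P'$ is another finite graded poset such that for every finite strictly increasing sequence $a=(a_1<\cdots<a_k)$ of nonnegative integers the number of strict chains $c_1<\cdots<c_k$ in $P$ with $(\operatorname{rk}(c_1),\dots,\operatorname{rk}(c_k))=a$ equals the corresponding number for $P'$, then $\mathsf{Z}_{P,\operatorname{rk}}=\mathsf{Z}_{P',\operatorname{rk}}$.
   Context: $q$ is an indeterminate; $[n]_q=(q^n-1)/(q-1)$. A poset is graded if it has a height function increasing by exactly $1$ along every cover relation; $\operatorname{rk}$ is such a function with minimum value $0$ on each connected component. For a finite poset $P$ with height function $h$ ($h(x)<h(y)$ when $y$ covers $x$), the $q$-Zeta polynomial $\mathsf{Z}_{P,h}\in\mathbb{Q}(q)[x]$ is the unique polynomial with $\mathsf{Z}_{P,h}([n]_q)=\sum_{e_1\le\cdots\le e_{n-1}\text{ in }P}q^{h(e_1)+\cdots+h(e_{n-1})}$ for all $n\ge2$ (it exists). *)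

(* Defs.v *)
From HB Require Import structures.
From mathcomp Require Import all_boot all_order all_algebra fraction.
Set Implicit Arguments. Unset Strict Implicit. Unset Printing Implicit Defensive.
Import Order.TTheory GRing.Theory Num.Theory.

Definition Qq : fieldType := {fraction {poly rat}}.
Definition qvar : Qq := @FracField.tofrac {poly rat} 'X.

Definition qint (n : nat) : Qq := ((qvar ^+ n - 1) / (qvar - 1))%R.

Section Posets.
Context {d : Order.disp_t} {P : finPOrderType d}.
Local Open Scope order_scope.

Definition covers (x y : P) : bool :=
  (x < y) && [forall z : P, ~~ ((x < z) && (z < y))].

(* comparability relation; its connected components are those of the poset *)
Definition comparable_rel : rel P := fun x y => (x <= y) || (y <= x).

Definition is_rank_function (rk : P -> nat) : Prop :=
  (forall x y : P, covers x y -> rk y = (rk x).+1) /\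
  (forall x : P, exists y : P, connect comparable_rel x y /\ rk y = 0%N).

Definition nchains (rk : P -> nat) (a : seq nat) : nat :=
  #|[set c : (size a).-tuple P | sorted (fun u v : P => u < v) c &&
                                  (map rk c == a)]|.

Definition multichain_sum (h : P -> nat) (n : nat) : Qq :=
  (\sum_(t : n.-1.-tuple P | sorted (fun u v : P => (u <= v)%O) t)
      qvar ^+ (\sum_(x <- t) h x)%N)%R.

Definition is_qZeta (h : P -> nat) (Z : {poly Qq}) : Prop :=
  forall n : nat, (2 <= n)%N -> (Z.[qint n])%R = multichain_sum h n.

End Posets.

(* Main.v *)
Require Import Defs.
From HB Require Import structures.
From mathcomp Require Import all_boot all_order all_algebra fraction.
Set Implicit Arguments. Unset Strict Implicit. Unset Printing Implicit Defensive.
Import Order.TTheory GRing.Theory Num.Theory.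
Section AlgS.
Local Open Scope ring_scope.

Lemma qvar_sub1_neq0 : qvar - 1 != 0.
Proof.
rewrite /qvar -(rmorph1 (@FracField.tofrac {poly rat})) -rmorphB tofrac_eq0.
by rewrite subr_eq0; apply/eqP=> /(congr1 (size : {poly rat} -> nat)); rewrite size_polyX size_poly1.
Qed.

Lemma qint_inj : injective qint.
Proof.
move=> n m; rewrite /qint => /(congr1 (fun x => x * (qvar - 1))).
rewrite !divfK ?qvar_sub1_neq0 // => /addIr.
rewrite /qvar -!rmorphXn => /eqP; rewrite tofrac_eq => /eqP.
by move/(congr1 (size : {poly rat} -> nat)); rewrite !size_polyXn => -[].
Qed.

Lemma poly_eq_qint (Z Z' : {poly Qq}) :
  (forall n, (2 <= n)%N -> Z.[qint n] = Z'.[qint n]) -> Z = Z'.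
Proof.
move=> H; apply/eqP; rewrite -subr_eq0; apply/negPn/negP => nz.
suff: (size (map qint (iota 2 (size (Z - Z')%R))) < size (Z - Z')%R)%N.
  by rewrite size_map size_iota ltnn.
apply: max_poly_roots => //.
  apply/allP=> x /mapP[n]; rewrite mem_iota => /andP[n2 _] ->.
  by rewrite rootE hornerD hornerN H // subrr.
by rewrite map_inj_uniq ?iota_uniq //; exact: qint_inj.
Qed.

End AlgS.

Section Pos.
Context {d : Order.disp_t} {P : finPOrderType d} (rk : P -> nat).
Hypothesis Hcov : forall x y : P, covers x y -> rk y = (rk x).+1.

Lemma card_open_lt (x w y : P) : (x < w)%O -> (w < y)%O ->
  #|[set v | (x < v)%O && (v < w)%O]| < #|[set v | (x < v)%O && (v < y)%O]|.
Proof.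
move=> xw wy.
rewrite (cardsD1 w [set v | (x < v)%O && (v < y)%O]) !inE xw wy /= add1n ltnS.
apply: subset_leq_card; apply/subsetP => v; rewrite !inE => /andP[xv vw].
by rewrite xv (lt_trans vw wy) (lt_eqF vw).
Qed.

Lemma card_half_lt (x z y : P) : (x < z)%O -> (z <= y)%O ->
  #|[set v | (z < v)%O && (v <= y)%O]| < #|[set v | (x < v)%O && (v <= y)%O]|.
Proof.
move=> xz zy.
rewrite (cardsD1 z [set v | (x < v)%O && (v <= y)%O]) !inE xz zy /= add1n ltnS.
apply: subset_leq_card; apply/subsetP => v; rewrite !inE => /andP[zv vy].
by rewrite (lt_trans xz zv) vy (gt_eqF zv).
Qed.

Lemma exists_cover n (x y : P) :
  #|[set v | (x < v)%O && (v < y)%O]| <= n -> (x < y)%O ->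
  exists z, covers x z && (z <= y)%O.
Proof.
elim: n y => [|n IH] y hc xy;
  (case: (boolP [forall z, ~~ ((x < z)%O && (z < y)%O)]) => [h|];
    [by exists y; rewrite /covers xy h lexx|]);
  rewrite negb_forall => /existsP[w]; rewrite negbK => /andP[xw wy].
  by have := card_open_lt xw wy; rewrite ltnNge (leq_trans hc).
have [z /andP[cz zw]] := IH w (leq_trans (card_open_lt xw wy) hc) xw.
by exists z; rewrite cz (le_trans zw (ltW wy)).
Qed.

Lemma rk_lt (x y : P) : (x < y)%O -> rk x < rk y.
Proof.
have: #|[set v | (x < v)%O && (v <= y)%O]| <= #|[set v | (x < v)%O && (v <= y)%O]| by [].
move: {2}#|_| => n; elim: n x => [|n IH] x hc xy;
  have [z /andP[cz zy]] := exists_cover (leqnn _) xy;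
  have rkz := Hcov cz; have xz : (x < z)%O by case/andP: cz.
  case: (eqVneq z y) => [<-|nzy]; first by rewrite rkz.
  have zy' : (z < y)%O by rewrite lt_neqAle nzy zy.
  by have := card_half_lt xz zy; rewrite ltnNge (leq_trans hc).
case: (eqVneq z y) => [<-|nzy]; first by rewrite rkz.
have zy' : (z < y)%O by rewrite lt_neqAle nzy zy.
have := IH z (leq_trans (card_half_lt xz zy) hc) zy'.
by rewrite rkz; apply: ltn_trans.
Qed.

End Pos.

Lemma undup_map_in (T U : eqType) (f : T -> U) (s : seq T) :
  {in s &, injective f} -> undup (map f s) = map f (undup s).
Proof.
elim: s => //= a s IH inj.
have inj' : {in s &, injective f}.
  by move=> x y xs ys; apply: inj; rewrite inE ?xs ?ys orbT.
have -> : (f a \in map f s) = (a \in s).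
  apply/mapP/idP => [[y ys /inj] |as_]; last by exists a.
  by move=> -> //; rewrite inE ?ys ?eqxx ?orbT.
by case: (a \in s) => //=; rewrite IH.
Qed.

Lemma index_map_in (T U : eqType) (f : T -> U) (s : seq T) x :
  {in s &, injective f} -> x \in s -> index (f x) (map f s) = index x s.
Proof.
elim: s => //= a s IH inj; rewrite inE => xs.
have inj' : {in s &, injective f}.
  by move=> u v us vs; apply: inj; rewrite inE ?us ?vs orbT.
case: (eqVneq a x) => [->|ax]; first by rewrite !eqxx.
have xs' : x \in s by case/predU1P: xs => // xa; rewrite xa eqxx in ax.
have fax : f a != f x.
  by apply: contra ax => /eqP /inj -> //; rewrite inE ?eqxx ?xs' ?orbT.
rewrite /index /= (negbTE fax); congr S.
exact: IH.
Qed.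

Section Chains.
Context {d : Order.disp_t} {P : finPOrderType d} (rk : P -> nat).
Hypothesis Hlt : forall x y : P, (x < y)%O -> rk x < rk y.

Lemma rk_le (x y : P) : (x <= y)%O -> rk x <= rk y.
Proof. by rewrite le_eqVlt => /predU1P[->//|/Hlt/ltnW]. Qed.

Lemma chain_rk_inj (t : seq P) : sorted <=%O t -> {in t &, injective rk}.
Proof.
move=> st x y xt yt exy.
have key : forall u v, u \in t -> v \in t -> index u t <= index v t ->
    rk u = rk v -> u = v.
  move=> u v ut vt iuv ruv.
  have : (nth u t (index u t) <= nth u t (index v t))%O.
    apply: (sorted_leq_nth le_trans lexx) => //; by rewrite inE index_mem.
  rewrite nth_index // (set_nth_default v) ?index_mem // nth_index //.
  by rewrite le_eqVlt => /predU1P[//|/Hlt]; rewrite ruv ltnn.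
case: (leqP (index x t) (index y t)) => h; first exact: key.
by apply/esym/key => //; exact: ltnW.
Qed.

Lemma map_rk_sorted (t : seq P) : sorted <=%O t -> sorted leq (map rk t).
Proof. by apply: homo_sorted; exact: rk_le. Qed.

Lemma undup_chain (t : seq P) : sorted <=%O t -> sorted <%O (undup t).
Proof.
move=> st; rewrite lt_sorted_uniq_le undup_uniq /=.
by apply: undup_sorted st; exact: le_trans.
Qed.

Lemma map_rk_undup (t : seq P) : sorted <=%O t ->
  map rk (undup t) = undup (map rk t).
Proof. by move=> st; rewrite undup_map_in //; exact: chain_rk_inj. Qed.

Variable x0 : P.
Definition gfun (c : seq P) (r : nat) := nth x0 c (index r (map rk c)).
Definition phi (c : seq P) (s : seq nat) := map (gfun c) s.

Lemma gfun_rk (c : seq P) y : sorted <=%O c -> y \in c -> gfun c (rk y) = y.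
Proof.
move=> sc yc; rewrite /gfun index_map_in ?nth_index //; exact: chain_rk_inj.
Qed.

Lemma phi_undup (t : seq P) : sorted <=%O t -> phi (undup t) (map rk t) = t.
Proof.
move=> st; rewrite /phi -map_comp; apply: map_id_in => y yt /=.
rewrite gfun_rk ?mem_undup //.
by apply: undup_sorted st; exact: le_trans.
Qed.

Section PhiC.
Variables (c : seq P) (s : seq nat).
Hypotheses (sc : sorted <%O c) (ss : sorted leq s) (cs : map rk c = undup s).

Lemma sc_le : sorted <=%O c.
Proof. by move: sc; rewrite lt_sorted_uniq_le => /andP[]. Qed.

Lemma rk_gfun r : r \in s -> rk (gfun c r) = r.
Proof.
move=> rs; have rc : r \in map rk c by rewrite cs mem_undup.
rewrite /gfun -(nth_map x0 (rk x0)); first by rewrite nth_index.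
by rewrite -(size_map rk) index_mem.
Qed.

Lemma map_rk_phi : map rk (phi c s) = s.
Proof. by rewrite /phi -map_comp; apply: map_id_in => r rs /=; rewrite rk_gfun. Qed.

Lemma phi_sorted : sorted <=%O (phi c s).
Proof.
rewrite /phi; apply: (homo_sorted_in (P := mem s) (e := leq)); last 2 first.
- by apply/allP.
- by [].
move=> r1 r2 r1s r2s r12.
have r1c : r1 \in map rk c by rewrite cs mem_undup.
have r2c : r2 \in map rk c by rewrite cs mem_undup.
have sltn : sorted ltn (map rk c) by rewrite cs ltn_sorted_uniq_leq undup_uniq undup_sorted //; exact: leq_trans.
have i12 : index r1 (map rk c) <= index r2 (map rk c).
  rewrite leqNgt; apply/negP => h.
  have := sorted_ltn_nth ltn_trans 0 sltn; move/(_ (index r2 (map rk c)) (index r1 (map rk c))).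
  rewrite !inE !index_mem r1c r2c => /(_ isT isT h).
  by rewrite !nth_index // ltnNge r12.
rewrite /gfun; apply: (sorted_leq_nth le_trans lexx) => //.
- exact: sc_le.
- by rewrite unfold_in /= -(size_map rk) index_mem.
- by rewrite unfold_in /= -(size_map rk) index_mem.
Qed.

Lemma undup_phi : undup (phi c s) = c.
Proof.
rewrite /phi undup_map_in; last first.
  move=> r1 r2 r1s r2s e; by rewrite -(rk_gfun r1s) -(rk_gfun r2s) e.
rewrite -cs -map_comp; apply: map_id_in => y yc /=.
exact: gfun_rk sc_le yc.
Qed.
End PhiC.
End Chains.

Section Count.
Context {d : Order.disp_t} {P : finPOrderType d} (rk : P -> nat).
Hypothesis Hlt : forall x y : P, (x < y)%O -> rk x < rk y.

Definition Bset m (s : seq nat) :=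
  [set t : m.-tuple P | sorted (fun u v : P => (u <= v)%O) t && (map rk t == s)].

Lemma card_B_size (s : seq nat) :
  #|Bset (size s) s| = sorted leq s * nchains rk (undup s).
Proof.
case: (boolP (sorted leq s)) => ss; last first.
  rewrite mul0n; apply/eqP; rewrite cards_eq0; apply/eqP/setP => t.
  rewrite !inE; apply/negP => /andP[st /eqP ms].
  by rewrite -ms (map_rk_sorted Hlt) in ss.
rewrite mul1n /nchains.
case: (pickP (@predT P)) => [x0 _ | P0]; last first.
  have E : forall n (Q : pred (n.-tuple P)), 0 < n -> #|[set t | Q t]| = 0.
    by case=> // n Q _; apply: eq_card0 => t; have := P0 (thead t).
  case: s ss => [|r s] ss.
    by apply: eq_card => t; rewrite !inE tuple0.
  rewrite !E //; rewrite lt0n size_eq0; apply/eqP => h.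
  by have := mem_undup (r :: s) r; rewrite h mem_head.
set A := [set c : (size (undup s)).-tuple P | _].
have -> : Bset (size s) s =
    [set map_tuple (gfun rk x0 (val c)) (in_tuple s) | c in A].
  apply/setP => t; rewrite inE; apply/idP/imsetP.
    case/andP => st /eqP ms.
    have hsz : size (undup (val t)) == size (undup s).
      by apply/eqP; rewrite -(size_map rk) map_rk_undup // ms.
    exists (Tuple hsz).
      rewrite inE /=; apply/andP; split; first exact: undup_chain.
      by rewrite map_rk_undup // ms.
    by apply: val_inj => /=; have := phi_undup Hlt x0 st; rewrite ms /phi => ->.
  case=> c; rewrite inE => /andP[sc /eqP cs] ->.
  rewrite /= map_rk_phi // eqxx andbT.
  exact: phi_sorted.
rewrite card_in_imset //.
move=> c1 c2; rewrite !inE => /andP[sc1 /eqP cs1] /andP[sc2 /eqP cs2] e.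
apply: val_inj => /=.
have := undup_phi Hlt x0 sc1 cs1; have := undup_phi Hlt x0 sc2 cs2.
rewrite /phi; by move: (congr1 val e) => /= -> ->.
Qed.

End Count.

Lemma msum_decomp d (P : finPOrderType d) (rk : P -> nat) (L : seq (seq nat)) m :
  uniq L -> (forall t : m.-tuple P, map rk t \in L) ->
  (\sum_(t : m.-tuple P | sorted (fun u v : P => (u <= v)%O) t)
      qvar ^+ (\sum_(x <- t) rk x)%N)%R
  = (\sum_(s <- L) qvar ^+ (\sum_(r <- s) r)%N *+ #|Bset rk m s|)%R.
Proof.
move=> uL inL.
rewrite (eq_bigr (fun t : m.-tuple P => \sum_(s <- L) (if s == map rk t then qvar ^+ (\sum_(r <- s) r)%N else 0))%R); last first.
  move=> t _; rewrite -big_mkcond -[RHS]big_filter.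
  have -> : [seq s <- L | s == map rk t] = [:: map rk t] by exact: filter_pred1_uniq.
  rewrite big_seq1.
  by rewrite big_map.
rewrite exchange_big /=; apply: eq_bigr => s _.
rewrite -big_mkcondr /= -sumr_const; apply: eq_bigl => t.
by rewrite inE eq_sym.
Qed.

Lemma card_B d (P : finPOrderType d) (rk : P -> nat)
  (Hlt : forall x y : P, (x < y)%O -> rk x < rk y) m s :
  #|Bset rk m s| = ((size s == m) && sorted leq s) * nchains rk (undup s).
Proof.
case: (eqVneq (size s) m) => [<-|ne]; first exact: card_B_size.
apply/eqP; rewrite cards_eq0; apply/eqP/setP => t; rewrite !inE.
apply/negP => /andP[_ /eqP ms]; move: ne; rewrite -ms size_map size_tuple eqxx //.
Qed.

Unset Implicit Arguments. Set Strict Implicit.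

Theorem mainTheorem20
  (d : Order.disp_t) (P : finPOrderType d) (rk : P -> nat)
  (d' : Order.disp_t) (P' : finPOrderType d') (rk' : P' -> nat) :
  is_rank_function rk -> is_rank_function rk' ->
  (forall a : seq nat, sorted ltn a -> nchains rk a = nchains rk' a) ->
  forall Z Z' : {poly Qq}, is_qZeta rk Z -> is_qZeta rk' Z' -> Z = Z'.
Proof.
move=> [Hc _] [Hc' _] Hn Z Z' HZ HZ'.
have Hlt := rk_lt Hc; have Hlt' := rk_lt Hc'.
apply: poly_eq_qint => n n2; rewrite HZ // HZ' // /multichain_sum.
set m := n.-1.
set L := undup ([seq map rk (val t) | t <- enum {: m.-tuple P}] ++
                [seq map rk' (val t) | t <- enum {: m.-tuple P'}]).
have uL : uniq L by exact: undup_uniq.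
have inL : forall t : m.-tuple P, map rk t \in L.
  by move=> t; rewrite mem_undup mem_cat (map_f (fun t : m.-tuple P => map rk (val t)) (mem_enum _ t)).
have inL' : forall t : m.-tuple P', map rk' t \in L.
  by move=> t; rewrite mem_undup mem_cat (map_f (fun t : m.-tuple P' => map rk' (val t)) (mem_enum _ t)) orbT.
rewrite (msum_decomp uL inL) (msum_decomp uL inL').
apply: eq_bigr => s _; congr (_ *+ _)%R.
rewrite (card_B Hlt) (card_B Hlt'); case: andP => // -[_ ss].
rewrite Hn // ltn_sorted_uniq_leq undup_uniq /=.
by apply: undup_sorted ss; exact: leq_trans.
Qed.
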